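(* Fix $n\in\mathbb Z_{\ge2}$ and $k\in\mathbb Z_{\ge1}$. Let $\sigma\in\mathrm{Av}(\searrow_n)$ with $|\sigma|\ge k$ be such that $\mathbb C(\sigma)$ is a rainbow $(n-1)$-colouring, i.e. its image is exactly $[n-1]$, and let $(\pi,\mathfrak c)=\mathrm{en}_k(\mathbb S(\sigma))$, an edge of $\mathcal{O}v_c(k,\searrow_n)$. Let $(\pi',\mathfrak c')$ be an edge of $\mathcal{O}v_c(k,\searrow_n)$ whose start vertex equals the arrival vertex of $(\pi,\mathfrak c)$, i.e. $\mathrm{be}_{k-1}(\pi',\mathfrak c')=\mathrm{en}_{k-1}(\pi,\mathfrak c)$. Then there exists $\iota\in[|\sigma|+1]$ such that $\mathrm{en}_k(\mathbb S(\sigma^{*\iota}))=(\pi',\mathfrak c')$.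
   Context: $\searrow_n=n(n-1)\cdots1$. For $I=\{i_1<\dots<i_j\}$, $\mathrm{pat}_I(\sigma)$ is the unique permutation with entries in the same relative order as $\sigma(i_1),\dots,\sigma(i_j)$; $\mathrm{Av}_m(\searrow_n)$ is the set of size-$m$ permutations with no $I$ such that $\mathrm{pat}_I(\sigma)=\searrow_n$, $\mathrm{Av}(\searrow_n)$ their union over $m\ge1$. For $\sigma\in\mathcal S_m$ and $\iota\in[m+1]$, $\sigma^{*\iota}$ is the permutation of $[m+1]$ with entries in the same relative order as $\sigma(1),\dots,\sigma(m),\iota-1/2$. A colouring of $\sigma\in\mathcal S_m$ is a map $\mathfrak c:[m]\to\mathbb Z_{\ge1}$; restriction $\mathrm{pat}_I(\sigma,\mathfrak c)=(\mathrm{pat}_I(\sigma),\mathfrak c')$ with $\mathfrak c'(\ell)=\mathfrak c(i_\ell)$; $\mathrm{be}_j=\mathrm{pat}_{\{1,\dots,j\}}$, $\mathrm{en}_j=\mathrm{pat}_{\{m-j+1,\dots,m\}}$. The RITMO colouring $\mathbb C(\sigma)$ processes indices in decreasing order of value, giving index $i$ the smallest positive integer $c$ such that no already coloured index $j<i$ has colour $c$ (equivalently: colour 1 on left-to-right maxima, colour 2 on left-to-right maxima of the remaining entries, etc.); $\mathbb S(\sigma)=(\sigma,\mathbb C(\sigma))$. A coloured permutation $(\pi,\mathfrak c)$ with $\pi\in\mathrm{Av}_k(\searrow_n)$ is inherited if there is $\sigma\in\mathrm{Av}(\searrow_n)$ with $|\sigma|\ge k$ and $\mathrm{en}_k(\mathbb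 S(\sigma))=(\pi,\mathfrak c)$; $\mathcal C_{n-1}(k)$ is the set of these. The coloured overlap graph $\mathcal{O}v_c(k,\searrow_n)$ has vertex set $\mathcal C_{n-1}(k-1)$, edge set $\mathcal C_{n-1}(k)$, the edge $(\pi,\mathfrak c)$ going from $\mathrm{be}_{k-1}(\pi,\mathfrak c)$ to $\mathrm{en}_{k-1}(\pi,\mathfrak c)$. *)

(* Defs.v *)
(* Permutations of [m] are represented as sequences
   [sigma(1); ...; sigma(m)] of naturals; colourings as sequences of naturals
   [c(1); ...; c(m)] of the same length. *)
From mathcomp Require Import all_boot.
Set Implicit Arguments. Unset Strict Implicit. Unset Printing Implicit Defensive.

Definition is_perm (s : seq nat) : bool := perm_eq s (iota 1 (size s)).

Definition std (s : seq nat) : seq nat :=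
  [seq (count (fun y => y < x) s).+1 | x <- s].

Definition decr (n : nat) : seq nat := rev (iota 1 n).

Definition pat (I : bitseq) (s : seq nat) : seq nat := std (mask I s).

Definition avoids (n : nat) (s : seq nat) : Prop :=
  forall I : bitseq, pat I s <> decr n.

Definition inAv (n : nat) (s : seq nat) : Prop :=
  [/\ is_perm s, 1 <= size s & avoids n s].

Definition inAv_m (m n : nat) (s : seq nat) : Prop :=
  [/\ is_perm s, size s = m & avoids n s].

(* sigma^{* iota}: relative order of sigma(1),...,sigma(m), iota - 1/2
   (values doubled to stay in nat: 2 sigma(i) versus 2 iota - 1) *)
Definition star (s : seq nat) (i : nat) : seq nat :=
  std (rcons [seq 2 * x | x <- s] (2 * i).-1).

Definition mex1 (l : seq nat) : nat :=
  nth 0 [seq c <- iota 1 (size l).+1 | c \notin l] 0.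

(* one step of the RITMO colouring: colour the index (0-based) holding value v,
   st is the current colouring (0 = not yet coloured) *)
Definition ritmo_step (s : seq nat) (st : seq nat) (v : nat) : seq nat :=
  let i := index v s in
  let used := [seq c <- take i st | 0 < c] in
  set_nth 0 st i (mex1 used).

Definition ritmo (s : seq nat) : seq nat :=
  foldl (ritmo_step s) (nseq (size s) 0) (rev (iota 1 (size s))).

Definition cperm := (seq nat * seq nat)%type.

Definition Sfun (s : seq nat) : cperm := (s, ritmo s).

Definition be (j : nat) (p : cperm) : cperm := (std (take j p.1), take j p.2).
Definition en (j : nat) (p : cperm) : cperm :=
  (std (drop (size p.1 - j) p.1), drop (size p.1 - j) p.2).

(* C_{n-1}(k): inherited coloured permutations = edges of Ov_c(k, decr n) *)
Definition inherited (n k : nat) (p : cperm) : Prop :=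
  inAv_m k n p.1 /\
  exists s, [/\ inAv n s, k <= size s & en k (Sfun s) = p].

Definition edge (k n : nat) (p : cperm) : Prop := inherited n k p.

Definition start_vertex (k : nat) (p : cperm) : cperm := be k.-1 p.
Definition arrival_vertex (k : nat) (p : cperm) : cperm := en k.-1 p.

Definition rainbow (n : nat) (c : seq nat) : Prop :=
  forall x, x \in c <-> 1 <= x <= n - 1.

(* Main.v *)
Require Import Defs.
From mathcomp Require Import all_boot.
From mathcomp Require Import zify.
Set Implicit Arguments. Unset Strict Implicit.

Definition oeq (x y : seq nat) := size x = size y /\ forall i j, i < size x -> j < size x ->
  (nth 0 x i < nth 0 x j) = (nth 0 y i < nth 0 y j).

Lemma oeq_refl x : oeq x x. Proof. by split. Qed.
Lemma oeq_sym x y : oeq x y -> oeq y x.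
Proof. move=> [E H]; split=> // i j; rewrite -E => *; by rewrite H. Qed.
Lemma oeq_trans x y z : oeq x y -> oeq y z -> oeq x z.
Proof. move=> [E H] [E' H']; split; first by rewrite E. move=> i j Hi Hj.
by rewrite H // H' // -E. Qed.
Lemma oeq_take t x y : oeq x y -> oeq (take t x) (take t y).
Proof. move=> [E H]; split; first by rewrite !size_take E.
move=> i j; rewrite size_take => Hi Hj.
have Hit : i < t by move: Hi; case: ifP; lia.
have Hjt : j < t by move: Hj; case: ifP; lia.
rewrite !nth_take //; apply: H; move: Hi Hj; case: ifP; lia.
Qed.
Lemma oeq_drop t x y : oeq x y -> oeq (drop t x) (drop t y).
Proof. move=> [E H]; split; first by rewrite !size_drop E.
move=> i j; rewrite size_drop => Hi Hj; rewrite !nth_drop; apply: H; lia. Qed.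

Lemma count_lt_strict (x : seq nat) a b : a < b ->
  count (fun y => y < a) x + count (pred1 a) x <= count (fun y => y < b) x.
Proof. move=> ab; elim: x => //= y x IH.
case: (ltngtP y a) => H /=; try (case: eqP => /= E); try lia.
Qed.

Lemma count_lt_lt (x : seq nat) a b : a \in x ->
  (count (fun y => y < a) x < count (fun y => y < b) x) = (a < b).
Proof. move=> ax; case: (ltnP a b) => H.
- have := count_lt_strict x H. have : 0 < count (pred1 a) x by rewrite -has_count; apply/hasP; exists a => //=.
  lia.
- apply/negbTE; rewrite -leqNgt; apply: sub_count => y /=; lia.
Qed.

Lemma std_nth x i : i < size x -> nth 0 (std x) i = (count (fun y => y < nth 0 x i) x).+1.
Proof. by move=> Hi; rewrite /std (nth_map 0). Qed.
Lemma size_std x : size (std x) = size x. Proof. by rewrite size_map. Qed.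

Lemma std_oeq x : oeq (std x) x.
Proof. split; first exact: size_std. move=> i j; rewrite size_std => Hi Hj.
rewrite !std_nth // ltnS count_lt_lt //; exact: mem_nth. Qed.

Lemma count_idx (P : pred nat) x : count P x = count (fun j => P (nth 0 x j)) (iota 0 (size x)).
Proof. by rewrite -{1}(mkseq_nth 0 x) /mkseq count_map. Qed.

Lemma oeq_std x y : oeq x y -> std x = std y.
Proof. move=> [E H]; apply: (@eq_from_nth _ 0); first by rewrite !size_std.
move=> i; rewrite size_std => Hi; rewrite !std_nth -?E //; congr _.+1.
rewrite (count_idx _ x) (count_idx _ y) -E; apply: eq_in_count => j; rewrite mem_iota /= => Hj; apply: H; lia.
Qed.

Lemma std_eq x y : std x = std y -> oeq x y.
Proof. move=> E; apply: oeq_trans (oeq_sym (std_oeq x)) _; rewrite E; exact: std_oeq. Qed.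

Lemma std_idem x : std (std x) = std x.
Proof. apply: oeq_std; exact: std_oeq. Qed.

Lemma oeq_rcons A B x y : oeq A B ->
  (forall i, i < size A -> (nth 0 A i < x) = (nth 0 B i < y) /\ (x < nth 0 A i) = (y < nth 0 B i)) ->
  oeq (rcons A x) (rcons B y).
Proof. move=> [E H] H2; split; first by rewrite !size_rcons E.
move=> i j; rewrite size_rcons !nth_rcons -E !ltnS => Hi Hj.
have [Hi'|Hi'] := ltnP i (size A); have [Hj'|Hj'] := ltnP j (size A).
- exact: H.
- have -> : j = size A by apply/eqP; rewrite eqn_leq Hj Hj'.
  rewrite eqxx; by case: (H2 i Hi').
- have -> : i = size A by apply/eqP; rewrite eqn_leq Hi Hi'.
  rewrite eqxx; by case: (H2 j Hj').
- have -> : j = size A by apply/eqP; rewrite eqn_leq Hj Hj'.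
  have -> : i = size A by apply/eqP; rewrite eqn_leq Hi Hi'.
  by rewrite eqxx !ltnn.
Qed.

Definition mexl (s acc : seq nat) (i : nat) :=
  mex1 [seq nth 0 acc j | j <- iota 0 i & nth 0 s i < nth 0 s j].
Fixpoint colN (s : seq nat) (n : nat) : seq nat :=
  if n is n'.+1 then rcons (colN s n') (mexl s (colN s n') n') else [::].
Definition cl s i := nth 0 (colN s i.+1) i.

Lemma size_colN s n : size (colN s n) = n.
Proof. by elim: n => //= n IH; rewrite size_rcons IH. Qed.

Lemma nth_colN s n i : i < n -> nth 0 (colN s n) i = cl s i.
Proof. elim: n => // n IH; rewrite ltnS leq_eqVlt => /orP[/eqP->|H] //.
by rewrite /= nth_rcons size_colN H IH. Qed.

Lemma cl_eq s i : cl s i = mex1 [seq cl s j | j <- iota 0 i & nth 0 s i < nth 0 s j].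
Proof. rewrite /cl /= nth_rcons size_colN ltnn eqxx /mexl; congr mex1.
apply/eq_in_map => j; rewrite mem_filter mem_iota /= => /andP[_ Hj].
exact: nth_colN. Qed.

Lemma cl_inv s t i0 : (forall i j, i <= i0 -> j <= i0 -> (nth 0 s i < nth 0 s j) = (nth 0 t i < nth 0 t j)) ->
  cl s i0 = cl t i0.
Proof. elim/ltn_ind: i0 => i0 IH H; rewrite !cl_eq.
have -> : [seq j <- iota 0 i0 | nth 0 s i0 < nth 0 s j] = [seq j <- iota 0 i0 | nth 0 t i0 < nth 0 t j].
  apply: eq_in_filter => j; rewrite mem_iota /= => Hj; apply: H; lia.
congr mex1; apply/eq_in_map => j; rewrite mem_filter mem_iota /= => /andP[_ Hj].
apply: IH; first lia. move=> a b Ha Hb; apply: H; lia.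
Qed.

Lemma mex1_pos l : 0 < mex1 l.
Proof.
have [c Hc Hcl] : exists2 c, c \in iota 1 (size l).+1 & c \notin l.
  apply/hasP; apply/negP => /negP; rewrite -all_predC => /allP Ha.
  have : size (iota 1 (size l).+1) <= size l.
    apply: uniq_leq_size; first exact: iota_uniq.
    move=> z Hz; have := Ha z Hz; by rewrite /= negbK.
  by rewrite size_iota ltnn.
rewrite /mex1.
have Hs : 0 < size [seq c <- iota 1 (size l).+1 | c \notin l].
  rewrite size_filter -has_count; apply/hasP; by exists c.
have := mem_nth 0 Hs; rewrite mem_filter mem_iota => /andP[_ /andP[]] //.
Qed.

Lemma cl_pos s i : 0 < cl s i.
Proof. rewrite cl_eq; exact: mex1_pos. Qed.

Definition stv s v := [seq if v < nth 0 s j then cl s j else 0 | j <- iota 0 (size s)].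

Lemma perm_props s : is_perm s -> uniq s /\ (forall x, (x \in s) = (1 <= x <= size s)).
Proof. rewrite /is_perm => P; split; first by rewrite (perm_uniq P) iota_uniq.
by move=> x; rewrite (perm_mem P) mem_iota; lia. Qed.

Lemma ritmo_step_stv s v : is_perm s -> v < size s -> ritmo_step s (stv s v.+1) v.+1 = stv s v.
Proof. move=> /perm_props [U M] Hv.
have Hin : v.+1 \in s by rewrite M; lia.
set i := index v.+1 s.
have Hi : i < size s by rewrite index_mem.
have Hsi : nth 0 s i = v.+1 by rewrite nth_index.
rewrite /ritmo_step -/i.
have -> : [seq c <- take i (stv s v.+1) | 0 < c] = [seq cl s j | j <- iota 0 i & nth 0 s i < nth 0 s j].
  rewrite /stv -map_take take_iota filter_map.
  have -> : minn i (size s) = i by lia.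
  rewrite Hsi; set F := (fun j => _).
  have -> : [seq j <- iota 0 i | preim F [eta leq 1] j] = [seq j <- iota 0 i | v.+1 < nth 0 s j].
    apply: eq_filter => j; rewrite /preim /F /=; case: ifP => //; by rewrite cl_pos.
  apply/eq_in_map => j; rewrite mem_filter /F => /andP[-> _] //.
rewrite -cl_eq.
apply: (@eq_from_nth _ 0).
  by rewrite size_set_nth /stv !size_map size_iota; lia.
move=> j; rewrite size_set_nth /stv size_map size_iota => Hj.
have Hj' : j < size s by lia.
rewrite nth_set_nth /= (nth_map 0) ?size_iota // nth_iota // add0n.
case: eqP => [->|Hne]; first by rewrite (nth_map 0) ?size_iota // nth_iota // add0n Hsi ltnSn.
rewrite (nth_map 0) ?size_iota // nth_iota // add0n.
have Hne' : nth 0 s j != v.+1.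
  apply/eqP => E; apply: Hne; rewrite /i -E index_uniq //.
by rewrite ltn_neqAle eq_sym Hne'.
Qed.

Lemma ritmo_cl s : is_perm s -> ritmo s = mkseq (cl s) (size s).
Proof. move=> P; have [U M] := perm_props P.
have E0 : stv s (size s) = nseq (size s) 0.
  apply: (@eq_from_nth _ 0); first by rewrite size_map size_iota size_nseq.
  move=> j; rewrite size_map size_iota => Hj.
  rewrite (nth_map 0) ?size_iota // nth_iota // add0n nth_nseq Hj.
  have : nth 0 s j \in s by exact: mem_nth.
  rewrite M => Hr; case: ifP => //; lia.
have E1 : stv s 0 = mkseq (cl s) (size s).
  apply/eq_in_map => j; rewrite mem_iota => Hj.
  have : nth 0 s j \in s by apply: mem_nth; move: Hj; rewrite add0n => /andP[].
  rewrite M => Hr; case: ifP => //; lia.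
have G : forall v, v <= size s -> foldl (ritmo_step s) (stv s v) (rev (iota 1 v)) = stv s 0.
  elim=> // v IH Hv.
  rewrite -addn1 iotaD rev_cat /= addn1 ritmo_step_stv //; apply: IH; lia.
by rewrite /ritmo -E0 G // E1.
Qed.

Lemma bigmax_ex (I : eqType) (r : seq I) (P : pred I) (F : I -> nat) :
  0 < \max_(i <- r | P i) F i -> exists2 i, (i \in r) && P i & F i = \max_(j <- r | P j) F j.
Proof. elim: r => [|x r IH]; first by rewrite big_nil.
rewrite big_cons; case: ifP => Px.
- case: (leqP (\max_(i <- r | P i) F i) (F x)) => H.
  + move=> _; exists x; first by rewrite in_cons eqxx Px.
    lia.
  + move=> _; have [|i Hi E] := IH; first lia.
    exists i; first by move: Hi; rewrite in_cons => /andP[-> ->]; rewrite orbT.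
    rewrite E; lia.
- move=> /IH [i Hi E]; exists i => //; move: Hi; rewrite in_cons => /andP[-> ->]; by rewrite orbT.
Qed.

Definition dc (l : seq nat) := forall x, x \in l -> 0 < x /\ forall y, 0 < y < x -> y \in l.

Lemma dc_in l y : dc l -> 0 < y <= \max_(x <- l) x -> y \in l.
Proof. move=> D /andP[y0 ym].
have [x /andP[Hx _] Ex] := @bigmax_ex _ l predT id (leq_trans y0 ym).
rewrite -Ex /= in ym. case: (ltngtP y x) => H; try lia.
- by case: (D x Hx) => _ ->; rewrite ?y0.
- by rewrite H.
Qed.

Lemma mex_dc l : dc l -> mex1 l = (\max_(x <- l) x).+1.
Proof. move=> D; set M := \max_(x <- l) x.
have In : forall y, 0 < y <= M -> y \in l by move=> y; exact: dc_in.
have ML : M <= size l.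
  have := @uniq_leq_size _ (iota 1 M) l (iota_uniq 1 M).
  rewrite size_iota; apply=> y; rewrite mem_iota => Hy; apply: In; lia.
have NM : M.+1 \notin l by apply/negP => H; have := @leq_bigmax_seq _ l predT id M.+1 H isT; rewrite -/M; lia.
rewrite /mex1.
have -> : (size l).+1 = M + (size l - M).+1 by lia.
rewrite iotaD filter_cat.
have -> : [seq c <- iota 1 M | c \notin l] = [::].
  rewrite (@eq_in_filter _ _ pred0) ?filter_pred0 // => y; rewrite mem_iota => Hy /=.
  rewrite In //; lia.
rewrite /= add1n NM //.
Qed.

Lemma cl_dc s i : dc [seq cl s j | j <- iota 0 i & nth 0 s i < nth 0 s j].
Proof. elim/ltn_ind: i => i IH x /mapP [j]; rewrite mem_filter mem_iota => /andP[Hij Hj] ->.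
split; first exact: cl_pos.
move=> y Hy; have Dj := IH j ltac:(lia).
move: Hy; rewrite {1}cl_eq mex_dc // big_map big_filter => Hy.
have : y \in [seq cl s j0 | j0 <- iota 0 j & nth 0 s j < nth 0 s j0].
  apply: dc_in => //; rewrite big_map big_filter; lia.
case/mapP => j' ; rewrite mem_filter mem_iota => /andP[Hj' Hj'r] ->.
apply: map_f; rewrite mem_filter mem_iota; apply/andP; split; first lia.
lia.
Qed.

Lemma cl_max s i : cl s i = (\max_(j <- iota 0 i | nth 0 s i < nth 0 s j) cl s j).+1.
Proof. rewrite {1}cl_eq mex_dc; last exact: cl_dc. by rewrite big_map big_filter. Qed.

Lemma count_lt_iota n x : count (fun y => y < x) (iota 1 n) = minn n x.-1.
Proof. elim: n => [|n IH]; first by rewrite min0n.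
have -> : iota 1 n.+1 = iota 1 n ++ [:: n.+1] by rewrite -(addn1 n) iotaD /= addn1 add1n.
rewrite count_cat IH /=; case: (ltnP n.+1 x) => H /=; lia. Qed.

Lemma nth_decr n a : a < n -> nth 0 (decr n) a = n - a.
Proof. move=> H; rewrite /decr nth_rev size_iota // nth_iota; lia. Qed.

Lemma std_decr n : std (decr n) = decr n.
Proof. apply: (@eq_from_nth _ 0); first by rewrite size_std.
move=> a; rewrite size_std /decr size_rev size_iota => Ha.
rewrite std_nth ?size_rev ?size_iota // -/(decr n) nth_decr // /decr count_rev count_lt_iota; lia.
Qed.

Lemma sorted_rcons_ext (e : rel nat) l x y : sorted e (rcons l x) -> e x y -> sorted e (rcons (rcons l x) y).
Proof. case: l => [|h t] /=; first by move=> _ ->.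
by rewrite !rcons_path last_rcons => -> ->. Qed.

Definition gtr : rel nat := fun a b => b < a.

Lemma chain s d i : i < size s -> d.+1 <= cl s i ->
  exists E : seq nat, [/\ size E = d, sorted gtr (rcons E (nth 0 s i))
    & subseq (rcons E (nth 0 s i)) (take i.+1 s)].
Proof. elim: d i => [|d IH] i Hi Hd.
- exists [::]; split => //.
  rewrite (take_nth 0 Hi) -!cats1; by rewrite -[X in subseq X _]cat0s subseq_cat2r sub0seq.
- move: Hd; rewrite cl_max ltnS => Hd.
  have [j /andP[Hj Hsj] Ej] := bigmax_ex (leq_trans (ltn0Sn d) Hd).
  move: Hj; rewrite mem_iota add0n => /andP[_ Hji].
  have Hjs : j < size s by lia.
  have Hjd : d.+1 <= cl s j by rewrite Ej.
  have [E [E1 E2 E3]] := IH j Hjs Hjd.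
  exists (rcons E (nth 0 s j)); split; first by rewrite size_rcons E1.
  + exact: sorted_rcons_ext.
  + rewrite (take_nth 0 Hi) -(cats1 _ (nth 0 s i)) -(cats1 (take i s)) subseq_cat2r.
    apply: (subseq_trans E3); rewrite -(take_takel (i:=j.+1) (j:=i)) //; exact: take_subseq.
Qed.

Lemma avoid_cl n s i : avoids n s -> 1 <= n -> i < size s -> cl s i <= n.-1.
Proof. move=> Av n1 Hi; rewrite leqNgt; apply/negP => Hc.
have [E [E1 E2 E3]] := @chain s n.-1 i Hi ltac:(lia).
have : subseq (rcons E (nth 0 s i)) s by apply: (subseq_trans E3); exact: take_subseq.
case/subseqP => m _ Em.
have Tr : transitive gtr by move=> a b c; rewrite /gtr; lia.
have Hs := sorted_ltn_nth Tr 0 E2.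
apply: (Av m); rewrite /pat -Em -std_decr; apply: oeq_std; split.
  by rewrite size_rcons E1 /decr size_rev size_iota; lia.
move=> a b; rewrite size_rcons E1 => Ha Hb.
rewrite !nth_decr; try lia.
case: (ltngtP a b) => H.
- have := Hs a b; rewrite !inE size_rcons E1 /gtr => /(_ Ha Hb H); lia.
- have := Hs b a; rewrite !inE size_rcons E1 /gtr => /(_ Hb Ha H); lia.
- rewrite H; lia.
Qed.

Section MinBig.
Variables (r : seq nat) (P : pred nat) (F : nat -> nat) (d : nat).
Lemma bmin_le i : i \in r -> P i -> \big[minn/d]_(j <- r | P j) F j <= F i.
Proof. elim: r => // x r' IH; rewrite in_cons big_cons => /orP[/eqP->|H] Pi.
- by rewrite Pi geq_minl.
- case: ifP => _; last exact: IH. have := IH H Pi; lia.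
Qed.
Lemma bmin_d : \big[minn/d]_(j <- r | P j) F j <= d.
Proof. elim: r => [|x r' IH]; first by rewrite big_nil. rewrite big_cons; case: ifP => _ //; lia. Qed.
Lemma bmin_glb x : (forall i, i \in r -> P i -> x < F i) -> x < d -> x < \big[minn/d]_(j <- r | P j) F j.
Proof. elim: r => [|y r' IH] H Hd; first by rewrite big_nil.
rewrite big_cons; have IH' := IH (fun i Hi => H i (mem_behead (s:=y :: r') Hi)) Hd.
case: ifP => Py //; have := H y (mem_head _ _) Py; lia. Qed.
End MinBig.

Lemma ivt (f : nat -> nat) t : forall dd lo, lo + dd = lo + dd -> 
  (forall x, lo <= x < lo + dd -> f x.+1 <= f x <= (f x.+1).+1) -> f (lo + dd) <= t <= f lo ->
  exists x, lo <= x <= lo + dd /\ f x = t.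
Proof. elim=> [|dd IH] lo _ H Ht.
- exists lo; rewrite addn0 in Ht *; split; [lia|]. apply/eqP; rewrite eqn_leq; lia.
- case: (ltngtP t (f lo)) => Hl; last by exists lo; split => //; lia.
  + have H1 : forall x, lo.+1 <= x < lo.+1 + dd -> f x.+1 <= f x <= (f x.+1).+1.
      move=> x Hx; apply: H; lia.
    have H2 : f (lo.+1 + dd) <= t <= f lo.+1.
      rewrite addSnnS; have := H lo ltac:(lia); lia.
    have [x [Hx Ex]] := IH lo.+1 erefl H1 H2.
    exists x; split => //; lia.
  + lia.
Qed.

Lemma core (s t : seq nat) m p k n :
  size s = m -> size t = p -> uniq s -> uniq t -> (forall x, (x \in s) = (1 <= x <= m)) ->
  1 <= k <= m -> k <= p ->
  (forall i j, i < k.-1 -> j < k.-1 ->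
     (nth 0 s (m - k + 1 + i) < nth 0 s (m - k + 1 + j)) = (nth 0 t (p - k + i) < nth 0 t (p - k + j))) ->
  (forall i, i < k.-1 -> cl t (p - k + i) = cl s (m - k + 1 + i)) ->
  (exists2 j, j < m & cl s j = n.-1) ->
  (forall j, j < p -> cl t j <= n.-1) ->
  exists io, [/\ 1 <= io <= m.+1,
    (forall i, i < k.-1 -> (nth 0 s (m - k + 1 + i) < io) = (nth 0 t (p - k + i) < nth 0 t p.-1)) &
    \max_(j <- iota 0 m | io <= nth 0 s j) cl s j =
    \max_(j <- iota 0 p.-1 | nth 0 t p.-1 < nth 0 t j) cl t j].
Proof.
move=> Sm Sp Us Ut Ms Hk Hkp HO HC [j0 Hj0 Ej0] HA.
set y := nth 0 t p.-1.
set W := fun i => nth 0 s (m - k + 1 + i); set Wt := fun i => nth 0 t (p - k + i).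
set r := iota 0 k.-1.
set a := \max_(i <- r | Wt i < y) W i.
set b := \big[minn/m.+1]_(i <- r | y < Wt i) W i.
set Mf := fun io => \max_(j <- iota 0 m | io <= nth 0 s j) cl s j.
set Mt := \max_(j <- iota 0 p.-1 | y < nth 0 t j) cl t j.
have Win : forall i, i < k.-1 -> 1 <= W i <= m.
  move=> i Hi; rewrite -Ms /W; apply: mem_nth. rewrite Sm; lia.
have Wty : forall i, i < k.-1 -> Wt i != y.
  move=> i Hi; rewrite /Wt /y; apply/eqP => E.
  have := nth_uniq 0 (s:=t) (i:=p - k + i) (j:=p.-1) ltac:(rewrite Sp; lia) ltac:(rewrite Sp; lia) Ut; rewrite E eqxx; lia.
have a1 : forall i, i < k.-1 -> Wt i < y -> W i <= a.
  move=> i Hi H; apply: (leq_bigmax_seq (F:=W)) => //; rewrite mem_iota; lia.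
have b1 : forall i, i < k.-1 -> y < Wt i -> b <= W i.
  move=> i Hi H; apply: bmin_le => //; rewrite mem_iota; lia.
have b2 : b <= m.+1 by apply: bmin_d.
have ab : a < b.
  have b0 : 0 < b.
    apply: bmin_glb => // i; rewrite mem_iota => Hi _; have := Win i ltac:(lia); lia.
  have : a <= b.-1; last lia.
  apply/bigmax_leqP_seq => i; rewrite mem_iota => Hi Hiy.
  have : W i < b; last lia.
  apply: bmin_glb; last by have := Win i ltac:(lia); lia.
  move=> j; rewrite mem_iota => Hj Hjy.
  have := HO i j ltac:(lia) ltac:(lia). rewrite -/(W i) -/(W j) -/(Wt i) -/(Wt j) => ->. lia.
have WC : forall io, a < io <= b -> forall i, i < k.-1 -> (W i < io) = (Wt i < y).
  move=> io Hio i Hi; case: (ltngtP (Wt i) y) => H.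
  - have := a1 i Hi H; lia.
  - have := b1 i Hi H; lia.
  - by move: (Wty i Hi); rewrite H eqxx.
have mono : forall io, Mf io.+1 <= Mf io.
  move=> io; apply/bigmax_leqP_seq => j Hj Hjio.
  apply: (leq_bigmax_seq (F := cl s)) => //; lia.
have step : forall io, Mf io <= (Mf io.+1).+1.
  move=> io; apply/bigmax_leqP_seq => j Hj Hjio.
  case: (ltnP io (nth 0 s j)) => H.
  - have := @leq_bigmax_seq _ (iota 0 m) (fun j => io.+1 <= nth 0 s j) (cl s) j Hj H. rewrite -/(Mf io.+1); lia.
  - rewrite cl_max ltnS; apply/bigmax_leqP_seq => j' Hj' Hjj'.
    apply: (leq_bigmax_seq (F := cl s)); last lia.
    move: Hj Hj'; rewrite !mem_iota; lia.
have claim1 : forall i, i < k.-1 -> y < Wt i -> cl s (m - k + 1 + i) <= Mt.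
  move=> i Hi H; rewrite -HC //; apply: (leq_bigmax_seq (F := cl t)) => //.
  rewrite mem_iota; lia.
have lo : Mf b <= Mt.
  apply/bigmax_leqP_seq => j; rewrite mem_iota => Hj Hbj.
  have Hsj : nth 0 s j <= m.
    have : nth 0 s j \in s by apply: mem_nth; rewrite Sm; lia.
    rewrite Ms; lia.
  case: (leqP (m - k + 1) j) => Hoj.
  - have Hi : j - (m - k + 1) < k.-1 by lia.
    have Ej : j = m - k + 1 + (j - (m - k + 1)) by lia.
    rewrite Ej; apply: claim1 => //.
    case: (ltngtP (Wt (j - (m - k + 1))) y) => H //.
    + have := a1 _ Hi H; rewrite /W -Ej; lia.
    + by move: (Wty _ Hi); rewrite H eqxx.
  - have : ~~ all (fun q => (y < Wt q) ==> (nth 0 s j < W q)) r.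
      apply/negP => /allP Hall.
      have : nth 0 s j < b.
        apply: bmin_glb; last lia.
        move=> q Hq Hqy; have := Hall q Hq; by rewrite Hqy.
      lia.
    rewrite -has_predC => /hasP [q]; rewrite mem_iota => Hq /=.
    rewrite negb_imply -leqNgt => /andP[Hqy Hqj].
    have Hne : W q != nth 0 s j.
      apply/eqP => E; have := nth_uniq 0 (s:=s) (i:=m - k + 1 + q) (j:=j) ltac:(rewrite Sm; lia) ltac:(rewrite Sm; lia) Us.
      rewrite /W in E; rewrite E eqxx; lia.
    have := claim1 q ltac:(lia) Hqy; rewrite cl_max.
    have : cl s j <= \max_(j' <- iota 0 (m - k + 1 + q) | nth 0 s (m - k + 1 + q) < nth 0 s j') cl s j'.
      apply: (leq_bigmax_seq (F := cl s)); first by rewrite mem_iota; lia.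
      rewrite -/(W q); lia.
    lia.
have hi : Mt <= Mf a.+1.
  apply/bigmax_leqP_seq => j; rewrite mem_iota => Hj Hyj.
  case: (leqP (p - k) j) => Hoj.
  - have Hi : j - (p - k) < k.-1 by lia.
    have Ej : j = p - k + (j - (p - k)) by lia.
    rewrite Ej HC //; apply: (leq_bigmax_seq (F := cl s)); first by rewrite mem_iota; lia.
    have := b1 _ Hi; rewrite /Wt -Ej => /(_ Hyj); rewrite /W; lia.
  - case: (boolP (has (fun i => Wt i < y) r)) => Hh.
    + have a0 : 0 < a.
        case/hasP: Hh => q Hq Hqy; have := a1 q ltac:(move: Hq; rewrite mem_iota; lia) Hqy.
        have := Win q ltac:(move: Hq; rewrite mem_iota; lia); lia.
      have [q /andP[Hq Hqy] Eq] := bigmax_ex a0.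
      move: Hq; rewrite mem_iota => Hq.
      rewrite -/a in Eq.
      have Ht : cl t j < cl t (p - k + q).
        rewrite (cl_max t (p - k + q)) ltnS; apply: (leq_bigmax_seq (F := cl t)).
          rewrite mem_iota; lia.
        rewrite -/(Wt q); lia.
      rewrite HC in Ht; last lia.
      move: Ht; rewrite (cl_max s) ltnS => Ht; apply: (leq_trans Ht).
      apply/bigmax_leqP_seq => j'; rewrite mem_iota => Hj' Hqj'.
      apply: (leq_bigmax_seq (F := cl s)); first by rewrite mem_iota; lia.
      rewrite -/(W q) Eq in Hqj'; lia.
    + have a0 : a = 0.
        apply/eqP; rewrite -leqn0; apply/bigmax_leqP_seq => q Hq Hqy.
        by case/negP: Hh; apply/hasP; exists q.
      rewrite a0; have := HA j ltac:(lia).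
      have : cl s j0 <= Mf 1.
        apply: (leq_bigmax_seq (F := cl s)); first by rewrite mem_iota; lia.
        have : nth 0 s j0 \in s by apply: mem_nth; rewrite Sm.
        rewrite Ms; lia.
      lia.
have Hab : a.+1 + (b - a.+1) = b by lia.
have I1 : forall x, a.+1 <= x < a.+1 + (b - a.+1) -> Mf x.+1 <= Mf x <= (Mf x.+1).+1.
  by move=> x _; rewrite mono step.
have I2 : Mf (a.+1 + (b - a.+1)) <= Mt <= Mf a.+1 by rewrite Hab lo hi.
have [io [Hio Eio]] := @ivt Mf Mt (b - a.+1) a.+1 erefl I1 I2.
exists io; split.
- rewrite Hab in Hio; lia.
- apply: WC; rewrite Hab in Hio; lia.
- exact: Eio.
Qed.

Lemma std_perm x : uniq x -> is_perm (std x).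
Proof. move=> Ux.
have Us : uniq (std x).
  rewrite /std map_inj_in_uniq // => a b Ha Hb [] E.
  case: (ltngtP a b) => H //.
  - by have := @count_lt_lt x a b Ha; rewrite H E ltnn.
  - by have := @count_lt_lt x b a Hb; rewrite H E ltnn.
have Sub : {subset std x <= iota 1 (size x)}.
  move=> z /mapP [a Ha ->]; rewrite mem_iota.
  have := @count_lt_lt x a a.+1 Ha; rewrite ltnSn => H.
  apply/andP; split => //; rewrite add1n ltnS; exact: leq_trans H (count_size _ _).
have [_ Eq] := uniq_min_size Us Sub ltac:(by rewrite size_iota size_std).
by rewrite /is_perm size_std; apply: uniq_perm => //; exact: iota_uniq.
Qed.

Theorem mainTheorem12 (n k : nat) (sigma : seq nat) (pi' c' : seq nat) :
  2 <= n -> 1 <= k ->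
  inAv n sigma -> k <= size sigma ->
  rainbow n (ritmo sigma) ->
  edge k n (pi', c') ->
  start_vertex k (pi', c') = arrival_vertex k (en k (Sfun sigma)) ->
  exists iota, 1 <= iota <= (size sigma).+1 /\
    en k (Sfun (star sigma iota)) = (pi', c').
Proof.
move=> Hn Hk [Ps Ss Avs] Hkm Hrb [_ [t [[Pt St Avt] Hkp Een]]] Hv.
case: Een => Epi Ec.
have [Us Ms] := perm_props Ps.
have [Ut Mt] := perm_props Pt.
have Rs := ritmo_cl Ps. have Rt := ritmo_cl Pt.
rewrite /start_vertex /arrival_vertex /be /en /Sfun /= size_std size_drop in Hv.
case: Hv => HV1 HV2.
set m := size sigma in Hkm Ms Rs HV1 HV2 *.
set p := size t in Hkp Mt Rt Epi Ec *.
have E1 : m - (m - k) - k.-1 = 1 by lia.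
rewrite E1 drop_drop in HV1 HV2.
have O1 : oeq (take k.-1 (drop (p - k) t)) (drop (1 + (m - k)) sigma).
  apply: (oeq_trans (oeq_take k.-1 (oeq_sym (std_oeq _)))); rewrite Epi.
  apply: (oeq_trans (std_eq HV1)); rewrite -drop_drop; apply: oeq_drop; exact: std_oeq.
have HO : forall i j, i < k.-1 -> j < k.-1 ->
     (nth 0 sigma (m - k + 1 + i) < nth 0 sigma (m - k + 1 + j)) = (nth 0 t (p - k + i) < nth 0 t (p - k + j)).
  move=> i j Hi Hj; case: O1 => _ H.
  have Hs : size (take k.-1 (drop (p - k) t)) = k.-1 by rewrite size_take size_drop; case: ifP; lia.
  have := H i j ltac:(by rewrite Hs) ltac:(by rewrite Hs).
  rewrite !nth_take // !nth_drop => ->.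
  by rewrite (addnC 1 (m - k)).
have HC : forall i, i < k.-1 -> cl t (p - k + i) = cl sigma (m - k + 1 + i).
  move=> i Hi; have := congr1 (fun l => nth 0 l i) HV2; rewrite /= nth_take // -Ec !nth_drop Rt Rs.
  rewrite !nth_mkseq; try lia. by rewrite (addnC 1 (m - k)).
have R : exists2 j, j < m & cl sigma j = n.-1.
  have : n.-1 \in ritmo sigma by apply/Hrb; lia.
  rewrite Rs => /mapP [j]; rewrite mem_iota => Hj ->; exists j => //; lia.
have HA : forall j, j < p -> cl t j <= n.-1.
  move=> j Hj; apply: avoid_cl Avt _ Hj; lia.
have [io [Hio WC Meq]] := @core sigma t m p k n erefl erefl Us Ut Ms ltac:(lia) Hkp HO HC R HA.
exists io; split => //.
set u := rcons [seq 2 * x | x <- sigma] (2 * io).-1.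
have Eu : star sigma io = std u by [].
have Uu : uniq u.
  rewrite /u rcons_uniq map_inj_in_uniq ?Us; last by move=> a b _ _; lia.
  rewrite andbT; apply/mapP => [[x _ E]]; lia.
have Pu := std_perm Uu.
have Su : size u = m.+1 by rewrite size_rcons size_map.
have nu : forall x, nth 0 u x = if x < m then 2 * nth 0 sigma x else if x == m then (2 * io).-1 else 0.
  move=> x; rewrite /u nth_rcons size_map; case: ifP => H //.
  by rewrite (nth_map 0).
have Hst : forall a b, a < m.+1 -> b < m.+1 -> (nth 0 (std u) a < nth 0 (std u) b) = (nth 0 u a < nth 0 u b).
  move=> a b Ha Hb; case: (std_oeq u) => _ H; apply: H; rewrite size_std Su //.
have clu : forall x, x < m -> cl (std u) x = cl sigma x.
  move=> x Hx; apply: cl_inv => a b Ha Hb.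
  have Ha' : a < m by lia. have Hb' : b < m by lia.
  rewrite Hst ?nu ?Ha' ?Hb' ?ltn_mul2l //; lia.
have Hyne : forall j, j < k.-1 -> nth 0 t (p - k + j) != nth 0 t p.-1.
  move=> j Hj; apply/eqP => E.
  have := nth_uniq 0 (s:=t) (i:=p - k + j) (j:=p.-1) ltac:(rewrite (_ : size t = p) //; lia) ltac:(rewrite (_ : size t = p) //; lia) Ut.
  rewrite E eqxx; lia.
rewrite Eu /en /Sfun /= size_std Su (ritmo_cl Pu) size_std Su -Epi -Ec Rt.
f_equal.
- apply: oeq_std; apply: (oeq_trans (oeq_drop _ (std_oeq u))); split.
    rewrite !size_drop Su; lia.
  move=> i j; rewrite size_drop Su => Hi Hj; rewrite !nth_drop !nu.
  have Ek : p - k + k.-1 = p.-1 by lia.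
  case: (ltnP i k.-1) => Hik; case: (ltnP j k.-1) => Hjk.
  + have -> : m.+1 - k + i = m - k + 1 + i by lia.
    have -> : m.+1 - k + j = m - k + 1 + j by lia.
    have -> : m - k + 1 + i < m by lia. have -> : m - k + 1 + j < m by lia.
    by rewrite ltn_mul2l /= HO.
  + have -> : j = k.-1 by lia.
    have -> : m.+1 - k + i = m - k + 1 + i by lia.
    have -> : m.+1 - k + k.-1 = m by lia.
    have -> : m - k + 1 + i < m by lia.
    rewrite ltnn eqxx Ek -WC //; apply/idP/idP; lia.
  + have -> : i = k.-1 by lia.
    have -> : m.+1 - k + j = m - k + 1 + j by lia.
    have -> : m.+1 - k + k.-1 = m by lia.
    have -> : m - k + 1 + j < m by lia.
    rewrite ltnn eqxx Ek.
    have := WC j Hjk; have := Hyne j Hjk.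
    case: (ltngtP (nth 0 t (p - k + j)) (nth 0 t p.-1)) => H //= _ W';
      apply/idP/idP; lia.
  + have -> : j = k.-1 by lia. have -> : i = k.-1 by lia. by rewrite !ltnn.
- apply: (@eq_from_nth _ 0); first by rewrite !size_drop !size_mkseq; lia.
  move=> i; rewrite size_drop size_mkseq => Hi.
  rewrite !nth_drop !nth_mkseq; try lia.
  case: (ltnP i k.-1) => Hik.
  + have -> : m.+1 - k + i = m - k + 1 + i by lia.
    rewrite HC // clu //; lia.
  + have -> : m.+1 - k + i = m by lia. have -> : p - k + i = p.-1 by lia.
    rewrite (cl_max (std u)) (cl_max t) -Meq; congr _.+1.
    rewrite big_seq_cond [RHS]big_seq_cond; apply: eq_big => j /=.
    * case Hj: (j \in iota 0 m) => //=; move: Hj; rewrite mem_iota => Hj.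
      rewrite Hst ?nu; try lia. rewrite ltnn eqxx (_ : j < m); last lia.
      apply/idP/idP; lia.
    * move=> /andP[Hj _]; move: Hj; rewrite mem_iota => Hj; apply: clu; lia.
Qed.
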